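(* With $n,\alpha,N,L,\ell$ as below: for $0\le k\le L-1$ and $1\le i\le N-L+1$, \[ \sum_{\substack{w\in W_k^>\\ p_1(w)=i}}q^{\mathrm{quinv}'(w)}=q^{\binom{\alpha_\ell}{2}+\cdots+\binom{\alpha_{n-1}}{2}+\binom{k+1}{2}+(i-1)L}\begin{bmatrix}N-L\\ \alpha_2,\dots,\alpha_{n-1}\end{bmatrix}\begin{bmatrix}N-i\\ k,\ N-L-i+1,\ L-k-1\end{bmatrix}, \] and for $1\le k\le L$ and $1\le j\le N-L+1$, \[ \sum_{\substack{w\in W_k^{\le}\\ p_n(w)=j}}q^{\mathrm{quinv}'(w)}=q^{\binom{\alpha_\ell}{2}+\cdots+\binom{\alpha_{n-1}}{2}+\binom{k}{2}+(j-1)L}\begin{bmatrix}N-L\\ \alpha_2,\dots,\alpha_{n-1}\end{bmatrix}\begin{bmatrix}N-j\\ k-1,\ N-L-j+1,\ L-k\end{bmatrix}. \]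
   Context: $n\ge3$, $\alpha=(\alpha_2,\dots,\alpha_{n-1})$ positive integers, $|\alpha|=\sum\alpha_i$, $N>|\alpha|$, $L=N-|\alpha|$, $2\le\ell\le n$. For $0\le k\le L$, $W_k$ is the set of words $w=(w_1,\dots,w_N)$ over $\{1,\dots,n\}$ with exactly $k$ letters $n$, exactly $L-k$ letters $1$, and exactly $\alpha_i$ letters $i$ for $2\le i\le n-1$. $\mathrm{coinv}(w)=\#\{(i,j):i<j,w_i<w_j\}$, and $\mathrm{quinv}'(w)=\mathrm{coinv}(w)+\binom{\alpha_\ell}{2}+\cdots+\binom{\alpha_{n-1}}{2}+\binom{k}{2}$ for $w\in W_k$ (empty middle sum if $\ell=n$). $p_n(w)$ is the position from the left of the leftmost $n$ in $w$; $p_1(w)$ is the position counted from the right of the rightmost $1$ in the word obtained from $w$ by deleting all $n$'s. $W_k^{\le}=\{w\in W_k:p_n(w)\le p_1(w)\}$, $W_k^>=\{w\in W_k:p_n(w)>p_1(w)\}$, with conventions $W_0=W_0^>$, $W_L=W_L^{\le}$. $q$-factorials $[m]!=\prod_{s=1}^m(1+q+\cdots+q^{s-1})$; $q$-multinomial $\begin{bmatrix}m\\ \beta_1,\dots,\beta_s\end{bmatrix}=\frac{[m]!}{[\beta_1]!\cdots[\beta_s]!}$ when all $\beta_i\ge0$ and $\sum\beta_i=m$, and $0$ if some $\beta_i<0$. *)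

(* Defs.v *)
From HB Require Import structures.
From mathcomp Require Import all_boot all_order all_algebra.
Set Implicit Arguments. Unset Strict Implicit. Unset Printing Implicit Defensive.
Import GRing.Theory.
Local Open Scope ring_scope.

(* Words are sequences of natural numbers (letters 1..n), positions 1-based. *)

Definition qint (s : nat) : {poly int} := \sum_(i < s) 'X^i.

Definition qfact (m : nat) : {poly int} := \prod_(1 <= s < m.+1) qint s.

(* The division is
   polynomial division; the divisor is monic so it is exact division. *)
Definition qmultinom (m : nat) (bs : seq nat) : {poly int} :=
  if (sumn bs == m)%N then qfact m %/ \prod_(b <- bs) qfact b else 0.

Definition coinv (w : seq nat) : nat :=
  (\sum_(i < size w) \sum_(j < size w | (i < j)%N)
     (nth 0 w i < nth 0 w j)%N)%N.

Definition inW (n : nat) (alpha : nat -> nat) (N L k : nat) (w : seq nat) : bool :=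
  [&& size w == N, all (fun x => (1 <= x <= n)%N) w,
      count_mem n w == k, count_mem 1%N w == (L - k)%N &
      all (fun i => count_mem i w == alpha i) (iota 2 (n - 2))].

Definition pn (n : nat) (w : seq nat) : nat := (index n w).+1.

Definition p1 (n : nat) (w : seq nat) : nat :=
  (index 1%N (rev (filter (fun x => x != n) w))).+1.

(* W_k^> and W_k^<= with conventions W_0 = W_0^>, W_L = W_L^<= *)
Definition Wgt (n : nat) (alpha : nat -> nat) (N L k : nat) (w : seq nat) : bool :=
  inW n alpha N L k w &&
  ((k == 0)%N || ((k != L) && (p1 n w < pn n w)%N)).
Definition Wle (n : nat) (alpha : nat -> nat) (N L k : nat) (w : seq nat) : bool :=
  inW n alpha N L k w &&
  ((k == L) || ((k != 0)%N && (pn n w <= p1 n w)%N)).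

Definition binsum (n l : nat) (alpha : nat -> nat) : nat :=
  (\sum_(l <= i < n) 'C(alpha i, 2))%N.

Definition quinv' (n l : nat) (alpha : nat -> nat) (k : nat) (w : seq nat) : nat :=
  (coinv w + binsum n l alpha + 'C(k, 2))%N.

(* all words of length N over {1,...,n}, enumerated via N-tuples over 'I_n *)
Definition word_of (n N : nat) (t : N.-tuple 'I_n) : seq nat :=
  map (fun x : 'I_n => (nat_of_ord x).+1) t.

Definition asum (n : nat) (alpha : nat -> nat) : nat := (\sum_(2 <= i < n) alpha i)%N.

Definition aseq (n : nat) (alpha : nat -> nat) : seq nat := map alpha (iota 2 (n - 2)).

(* Main.v *)
Require Import Defs.
From HB Require Import structures.
From mathcomp Require Import all_boot all_order all_algebra.
From mathcomp Require Import zify ring.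
Import GRing.Theory.
Local Open Scope ring_scope.


Fixpoint coinvR (s : seq nat) : nat :=
  if s is x :: s' then (count (fun y => x < y) s' + coinvR s')%N else 0%N.

Lemma count_sum_nth (x : nat) (s : seq nat) :
  (\sum_(j < size s) (x < nth 0 s j)%N)%N = count (fun y => x < y)%N s.
Proof.
elim: s => [|y s IH]; first by rewrite big_ord0.
by rewrite /= big_ord_recl /= IH.
Qed.

Lemma coinvE w : coinv w = coinvR w.
Proof.
rewrite /coinv; elim: w => [|x w IH]; first by rewrite big_ord0.
rewrite /= big_ord_recl /= -IH.
congr (_ + _)%N.
  rewrite big_mkcond big_ord_recl /= add0n -count_sum_nth.
  by apply: eq_bigr => j _.
apply: eq_bigr => i _.
rewrite big_mkcond big_ord_recl /= add0n [in RHS]big_mkcond.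
by apply: eq_bigr => j _.
Qed.


Section PermSums.
Variable R : nmodType.

Lemma perms_nil (F : seq nat -> R) : \sum_(w <- permutations [::]) F w = F [::].
Proof. by rewrite /permutations /= big_cons big_nil addr0. Qed.

Lemma perms_first (s : seq nat) (F : seq nat -> R) : (0 < size s)%N ->
  \sum_(w <- permutations s) F w =
  \sum_(x <- undup s) \sum_(t <- permutations (rem x s)) F (x :: t).
Proof.
move=> hs; rewrite (perm_big _ (permutationsE hs)) /=.
by rewrite big_allpairs_dep.
Qed.

Lemma perms_perm (s s' : seq nat) (F : seq nat -> R) : perm_eq s s' ->
  \sum_(w <- permutations s) F w = \sum_(w <- permutations s') F w.
Proof. by move=> h; apply: perm_big; apply: perm_permutations. Qed.

Lemma undup_split (a : nat) (s : seq nat) (H : nat -> R) :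
  \sum_(x <- undup s) H x =
  (if a \in s then H a else 0) + \sum_(x <- undup (filter (fun y => y != a) s)) H x.
Proof.
case: ifP => ha.
  rewrite (bigD1_seq a) ?mem_undup ?undup_uniq //=.
  by rewrite -big_filter filter_undup.
rewrite add0r; congr (\sum_(x <- undup _) _).
apply/esym/all_filterP/allP => y ys; apply: contraNneq (negbT ha) => <-.
by [].
Qed.

End PermSums.


Lemma filter_rem_same (a : nat) s :
  filter (fun y => y != a) (rem a s) = filter (fun y => y != a) s.
Proof.
elim: s => //= y s IH; case: (eqVneq y a) => [->|ya] /=; first by rewrite ?eqxx.
by rewrite ya /= IH.
Qed.

Lemma filter_rem_other (a x : nat) s : x != a ->
  filter (fun y => y != a) (rem x s) = rem x (filter (fun y => y != a) s).
Proof.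
move=> xa; elim: s => //= y s IH; case: (eqVneq y x) => [->|yx] /=.
  by rewrite xa /= eqxx.
by case: (y != a); rewrite /= ?(negbTE yx) IH.
Qed.

Lemma map_rem_fib (f : nat -> nat) (a : nat) s :
  (forall y, f y = f a -> y = a) -> map f (rem a s) = rem (f a) (map f s).
Proof.
move=> hf; elim: s => //= y s IH; case: (eqVneq y a) => [->|ya] /=.
  by rewrite eqxx.
have -> : (f y == f a) = false by apply/eqP => /hf /eqP; rewrite (negbTE ya).
by rewrite IH.
Qed.

Lemma undup_nseq (m x : nat) : undup (nseq m.+1 x) = [:: x].
Proof.
elim: m => //= m IH; rewrite inE eqxx /=.
by move: IH => /=; case: m => [|m] /=; rewrite ?inE ?eqxx //=.
Qed.

Section Split.
Variable R : nmodType.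

Lemma split_sum (a b0 b1 : nat) (s : seq nat) (F : seq nat -> seq nat -> R) :
  b0 != b1 ->
  \sum_(w <- permutations s)
     F (map (fun y => if y == a then b1 else b0) w) (filter (fun y => y != a) w) =
  \sum_(m <- permutations (map (fun y => if y == a then b1 else b0) s))
    \sum_(v <- permutations (filter (fun y => y != a) s)) F m v.
Proof.
move=> b01; set mu := (fun y => if y == a then b1 else b0).
have filt_cons : forall x t, filter (fun y => y != a) (x :: t) =
   if x != a then x :: filter (fun y => y != a) t else filter (fun y => y != a) t.
  by [].
have [k] := ubnP (size s); elim: k s F => // k IH s F hs.
case: (posnP (size s)) => [/size0nil -> | s0'].
  by rewrite /= !perms_nil.
rewrite perms_first // (undup_split _ a).
rewrite (@perms_first _ (map mu s)) ?size_map //.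
rewrite [RHS](undup_split _ b1).
have mub1 : (b1 \in map mu s) = (a \in s).
  apply/mapP/idP => [[y ys e]|ha]; last by exists a; rewrite // /mu eqxx.
  move: e; rewrite /mu; case: (eqVneq y a) => [<- //|_ e].
  by move: b01; rewrite e eqxx.
have fmap : filter (fun y => y != b1) (map mu s) = nseq (size (filter (fun y => y != a) s)) b0.
  elim: (s) => //= y t ->; rewrite /mu; case: (eqVneq y a) => //= _.
    by rewrite eqxx.
  by rewrite b01.
rewrite fmap mub1; congr (_ + _).
  case: ifP => // ha.
  have mua : mu a = b1 by rewrite /mu eqxx.
  under eq_bigr => t _ do rewrite map_cons filt_cons eqxx mua.
  have -> := IH (rem a s) (fun m v => F (b1 :: m) v).
    rewrite (@map_rem_fib mu a); last first.
      by move=> y; rewrite /mu eqxx; case: (eqVneq y a) => // _ e; move: b01; rewrite e eqxx.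
    by rewrite mua filter_rem_same.
  by rewrite size_rem // -ltnS prednK.
case fsE : (filter (fun y => y != a) s) => [|x0 fs0].
  by rewrite !big_nil.
rewrite (_ : size (x0 :: fs0) = (size fs0).+1) // undup_nseq big_cons big_nil addr0.
under [RHS]eq_bigr => m' _ do rewrite (@perms_first _ (x0 :: fs0)) //.
rewrite exchange_big -fsE.
apply: eq_big_seq => x; rewrite mem_undup => xfs.
have xa : x != a by move: xfs; rewrite mem_filter => /andP[].
have xs : x \in s by move: xfs; rewrite mem_filter => /andP[].
have mux : mu x = b0 by rewrite /mu (negbTE xa).
under [LHS]eq_bigr => t _ do rewrite map_cons filt_cons xa mux.
have -> := IH (rem x s) (fun m v => F (b0 :: m) (x :: v)).
  rewrite filter_rem_other //.
  apply: perms_perm.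
  have h1 := perm_to_rem xs.
  have h2 : perm_eq (map mu s) (b0 :: map mu (rem x s)).
    by have := perm_map mu h1; rewrite map_cons mux.
  have b0m : b0 \in map mu s by rewrite (perm_mem h2) inE eqxx.
  have h3 := perm_to_rem b0m.
  by rewrite -(perm_cons b0) -(permPl h2) h3.
by rewrite size_rem // -ltnS prednK.
Qed.

End Split.


Lemma coinv_split (a b0 b1 : nat) (w : seq nat) :
  b0 != b1 -> (forall y, y \in w -> y != a -> (y < a)%N = (b0 < b1)%N) ->
  coinvR w = (coinvR (map (fun y => if y == a then b1 else b0) w) +
              coinvR (filter (fun y => y != a) w))%N.
Proof.
move=> b01; set mu := (fun y => if y == a then b1 else b0).
have elem : forall x y, (x != a -> (x < a)%N = (b0 < b1)%N) ->
   (y != a -> (y < a)%N = (b0 < b1)%N) ->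
   nat_of_bool (x < y)%N = (nat_of_bool (mu x < mu y)%N + nat_of_bool ((x != a) && (y != a) && (x < y)%N))%N.
  move=> x y hx hy; rewrite /mu.
  case: (eqVneq x a) => [->|xa]; case: (eqVneq y a) => [->|ya] /=.
  - by rewrite !ltnn.
  - move: (hy ya); rewrite ltnNge leq_eqVlt eq_sym (negbTE ya) /= => /negbRL ->.
    by rewrite addn0; move: b01; case: ltngtP.
  - by rewrite (hx xa) addn0.
  - by rewrite ltnn.
elim: w => [|x w IH] hw //=.
have hw' : forall y, y \in w -> y != a -> (y < a)%N = (b0 < b1)%N.
  by move=> y yw; apply: hw; rewrite inE yw orbT.
have hx : x != a -> (x < a)%N = (b0 < b1)%N by apply: hw; rewrite inE eqxx.
rewrite IH //.
have cnt : count (fun y => x < y)%N w =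
   (count (fun y => mu x < y)%N (map mu w) +
    (if x != a then count (fun y => x < y)%N (filter (fun y => y != a) w) else 0))%N.
  elim: w hw' {IH hw} => [|y w IHw] hw' /=; first by case: (x != a).
  rewrite IHw; last by move=> z zw; apply: hw'; rewrite inE zw orbT.
  rewrite (elem x y hx (hw' y (mem_head y w))).
  case: (eqVneq x a) => [->|xa] /=; rewrite ?addn0 //.
  by case: (eqVneq y a) => [->|ya] /=; rewrite ?addn0; lia.
rewrite cnt; case: (x != a) => /=; lia.
Qed.


Lemma qint0 : qint 0 = 0. Proof. by rewrite /qint big_ord0. Qed.

Lemma qintD a b : qint (a + b) = qint a + 'X^a * qint b.
Proof.
rewrite /qint big_split_ord /=; congr (_ + _).
by rewrite mulr_sumr; apply: eq_bigr => i _; rewrite -exprD.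
Qed.

Lemma qfact0 : qfact 0 = 1. Proof. by rewrite /qfact big_nil. Qed.

Lemma qfactS c : qfact c.+1 = qfact c * qint c.+1.
Proof. by rewrite /qfact big_nat_recr. Qed.

Lemma count_split_B (x B : nat) s : (x < B)%N -> all (fun y => y < B.+1)%N s ->
  count (fun y => x < y)%N s = (count_mem B s + count (fun y => x < y)%N (filter (fun y => y < B)%N s))%N.
Proof.
move=> xB; elim: s => //= y s IH /andP[yB hs]; rewrite IH //.
case: (ltnP y B) => h /=.
  by rewrite (ltn_eqF h); lia.
have -> : y = B by lia.
by rewrite eqxx xB; lia.
Qed.

Lemma telescope (B : nat) (s : seq nat) : all (fun x => x < B)%N s ->
  \sum_(x < B) 'X^(count (fun y => x < y)%N s) * qint (count_mem (x : nat) s) = qint (size s).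
Proof.
elim: B s => [|B IH] s hs.
  by case: s hs => [|y s] //=; rewrite big_ord0 qint0.
rewrite big_ord_recr /=.
set s' := filter (fun y => y < B)%N s.
have hs' : all (fun x => x < B)%N s' by apply/allP => y; rewrite mem_filter => /andP[].
have cB : count (fun y => B < y)%N s = 0%N.
  apply/eqP; rewrite -leqn0 leqNgt -has_count; apply/hasPn => y ys.
  by move/allP: hs => /(_ y ys); rewrite -leqNgt.
have sz : size s = (size s' + count_mem B s)%N.
  rewrite /s' size_filter -[LHS](count_predC (fun y => y < B)%N).
  congr (_ + _)%N; apply: eq_in_count => y ys /=.
  by move/allP: hs => /(_ y ys) h; apply/idP/eqP; lia.
have e : forall x : 'I_B, 'X^(count (fun y => x < y)%N s) * qint (count_mem (x:nat) s) =
   'X^(count_mem B s) * ('X^(count (fun y => x < y)%N s') * qint (count_mem (x:nat) s')).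
  move=> x; rewrite mulrA -exprD; congr ('X^_ * qint _).
    by apply: count_split_B.
  rewrite /s' count_filter; apply: eq_count => y /=.
  by case: (eqVneq y x) => [->|] //=; rewrite ltn_ord.
under eq_bigr => x _ do rewrite e.
by rewrite -mulr_sumr IH // cB expr0 mul1r sz addnC qintD addrC.
Qed.

Lemma sum_undup_ord (R : nmodType) (B : nat) (s : seq nat) (H : nat -> R) :
  all (fun x => x < B)%N s -> \sum_(x <- undup s) H x = \sum_(x < B | (x : nat) \in s) H x.
Proof.
move=> hs; rewrite -big_mkord /index_iota subn0 -big_filter.
apply: perm_big; apply: uniq_perm; rewrite ?undup_uniq ?filter_uniq ?iota_uniq //.
move=> x; rewrite mem_undup mem_filter mem_iota leq0n add0n.
case xs: (x \in s).
  by move: (allP hs x xs) => /= ->; rewrite andbT; exact: (esym xs).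
by apply/esym; apply: contraNF (negbT xs) => /andP[].
Qed.

Lemma count_rem (x y : nat) s : x \in s ->
  count_mem y s = ((x == y) + count_mem y (rem x s))%N.
Proof. by move=> xs; rewrite (permP (perm_to_rem xs)). Qed.

Lemma prodqf_rem (B x : nat) s : x \in s -> (x < B)%N ->
  \prod_(y < B) qfact (count_mem (y : nat) s) =
  qint (count_mem x s) * \prod_(y < B) qfact (count_mem (y : nat) (rem x s)).
Proof.
move=> xs xB.
rewrite (bigD1 (Ordinal xB)) //= [in RHS](bigD1 (Ordinal xB)) //=.
rewrite (@count_rem x x s xs) eqxx add1n qfactS.
rewrite (eq_bigr (fun y : 'I_B => qfact (count_mem (y : nat) (rem x s)))); last first.
  move=> y hy; rewrite (@count_rem x y s xs).
  have -> : (x == y) = false.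
    by apply/negbTE; apply: contra hy => /eqP e; apply/eqP/val_inj; rewrite /= e.
  by [].
by rewrite mulrCA mulrA.
Qed.

Lemma E0 (B : nat) (s : seq nat) : all (fun x => x < B)%N s ->
  (\sum_(w <- permutations s) 'X^(coinvR w)) * \prod_(y < B) qfact (count_mem (y : nat) s)
  = qfact (size s).
Proof.
have [k] := ubnP (size s); elim: k s => // k IH s hs hB.
case: (posnP (size s)) => [/size0nil -> | s0].
  rewrite perms_nil /= expr0 mul1r qfact0.
  by rewrite big1 // => y _; rewrite qfact0.
rewrite perms_first // mulr_suml.
rewrite (eq_big_seq (fun x => 'X^(count (fun y => x < y)%N s) * qint (count_mem x s) * qfact (size s).-1)); last first.
  move=> x; rewrite mem_undup => xs.
  have xB : (x < B)%N by move/allP: hB => /(_ x xs).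
  rewrite (@prodqf_rem B x s xs xB) -mulrA.
  rewrite (eq_big_seq (fun t => 'X^(count (fun y => x < y)%N s) * 'X^(coinvR t))); last first.
    move=> t; rewrite mem_permutations => ht /=.
    rewrite exprD; congr ('X^_ * _).
    rewrite (permP ht) (permP (perm_to_rem xs)) /= ltnn.
    by [].
  have hr : all (fun x => x < B)%N (rem x s).
    by apply/allP => y /mem_rem yr; move/allP: hB => /(_ y yr).
  have sz : (size (rem x s) < k)%N by rewrite size_rem // -ltnS prednK.
  have IHx := IH (rem x s) sz hr.
  rewrite size_rem // in IHx.
  rewrite -mulr_sumr -IHx; ring.
rewrite -mulr_suml (@sum_undup_ord _ B s (fun x => 'X^(count (fun y => x < y)%N s) * qint (count_mem x s)) hB).
rewrite big_mkcond /=.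
rewrite (eq_bigr (fun x : 'I_B => 'X^(count (fun y => x < y)%N s) * qint (count_mem (x : nat) s))); last first.
  move=> x _; case: ifP => // /negbT xs.
  by rewrite (count_memPn xs) qint0 mulr0.
by rewrite telescope // -[in qfact (size s)](prednK s0) qfactS prednK // mulrC.
Qed.


Lemma sum_perms_bij (R : nmodType) (g : seq nat -> seq nat) (P : pred (seq nat))
  (s s' : seq nat) (F : seq nat -> R) :
  injective g ->
  (forall m, perm_eq m s' -> perm_eq (g m) s && P (g m)) ->
  (forall m, perm_eq m s -> P m -> exists2 m', perm_eq m' s' & m = g m') ->
  \sum_(m <- permutations s | P m) F m = \sum_(m <- permutations s') F (g m).
Proof.
move=> ginj h1 h2; rewrite -big_filter -[RHS](big_map g xpredT F).
apply: perm_big; apply: uniq_perm.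
- by rewrite filter_uniq // permutations_uniq.
- by rewrite (map_inj_uniq ginj) permutations_uniq.
move=> m; rewrite mem_filter mem_permutations.
apply/andP/mapP => [[pm ms]|[m' m's ->]].
  by have [m' hm' ->] := h2 m ms pm; exists m'; rewrite // mem_permutations.
by move: m's; rewrite mem_permutations => /h1 /andP[-> ->].
Qed.

Definition bl (a b : nat) : seq nat := nseq b 0%N ++ nseq a 1%N.

Lemma perm_bl m a b : perm_eq m (bl a b) =
  [&& all (fun z => z <= 1)%N m, count_mem 1%N m == a & count_mem 0%N m == b].
Proof.
apply/idP/idP.
  move=> pm; rewrite (perm_all _ pm) !(permP pm) /bl all_cat !count_cat !count_nseq /=.
  rewrite !all_nseq /= !orbT /=; apply/andP; split; apply/eqP; lia.
case/and3P => ha /eqP h1 /eqP h0; apply/allP => x _ /=; apply/eqP.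
rewrite /bl count_cat !count_nseq /=.
case: (eqVneq x 0%N) => [->|x0] /=; first by rewrite h0; lia.
case: (eqVneq x 1%N) => [->|x1] /=; first by rewrite h1; lia.
rewrite !mul0n addn0.
apply/eqP; rewrite -leqn0 leqNgt -has_count; apply/hasP => -[z zm /eqP zx].
move/allP: ha => /(_ z zm); rewrite zx; lia.
Qed.

Lemma coinv_cat (s t : seq nat) :
  coinvR (s ++ t) = (coinvR s + coinvR t + sumn (map (fun x => count (fun y => x < y)%N t) s))%N.
Proof.
elim: s => [|x s IH] /=; first by rewrite add0n addn0.
rewrite IH count_cat; lia.
Qed.

Lemma pre1 (x y : nat) (m : seq nat) (r : nat) :
  all (fun z => (z == x) || (z == y)) m -> x != y -> index y m = r -> (r < size m)%N ->
  m = nseq r x ++ y :: drop r.+1 m.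
Proof.
elim: m r => [|z m IH] r //= /andP[hz hm] xy.
case: (eqVneq z y) => [->|zy] /=; first by move=> <- _; rewrite drop0.
move=> <- hs /=; rewrite (negbTE zy) orbF in hz; rewrite (eqP hz).
by congr (_ :: _); apply: IH.
Qed.

Lemma pre2 (x y : nat) (m : seq nat) (r : nat) :
  all (fun z => (z == x) || (z == y)) m -> (r <= index y m)%N ->
  m = nseq r x ++ drop r m.
Proof.
elim: m r => [|z m IH] r /=.
  by move=> _; rewrite leqn0 => /eqP ->.
move=> /andP[hz hm]; case: r => [|r] //=.
case: (eqVneq z y) => [->|zy] //=; rewrite ltnS => hr.
rewrite (negbTE zy) orbF in hz; rewrite (eqP hz); congr (_ :: _); exact: IH.
Qed.

Lemma all01 (m : seq nat) : all (fun z => z <= 1)%N m ->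
  all (fun z => (z == 0%N) || (z == 1%N)) m /\ all (fun z => (z == 1%N) || (z == 0%N)) m.
Proof.
move=> h; split; apply/allP => z zm; move/allP: h => /(_ z zm) /= hz;
  apply/orP; lia.
Qed.


Definition Bn (a b : nat) : {poly int} := \sum_(m <- permutations (bl a b)) 'X^(coinvR m).

Lemma catl_inj (p : seq nat) : injective (cat p).
Proof. by elim: p => //= z p IH x y [] /IH. Qed.

Lemma catr_inj (t : seq nat) : injective (fun x : seq nat => x ++ t).
Proof.
move=> x y /(congr1 rev); rewrite !rev_cat => /catl_inj /(congr1 rev).
by rewrite !revK.
Qed.

Lemma coinv_nseq r x : coinvR (nseq r x) = 0%N.
Proof. by elim: r => //= r ->; rewrite count_nseq /= ltnn. Qed.

Lemma cnt_gt1 m : all (fun z => z <= 1)%N m -> count (fun y => 1 < y)%N m = 0%N.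
Proof. by elim: m => //= z m IH /andP[hz /IH ->]; rewrite ltnNge hz. Qed.

Lemma cnt_gt0 m : all (fun z => z <= 1)%N m -> count (fun y => 0 < y)%N m = count_mem 1%N m.
Proof.
elim: m => //= z m IH /andP[hz /IH ->]; congr (_ + _)%N.
by case: z hz => [|[|z]].
Qed.

Lemma sum_pref m t : all (fun z => z <= 1)%N m ->
  sumn (map (fun x => count (fun y => x < y)%N t) m) =
  (count_mem 0%N m * count (fun y => 0 < y)%N t + count_mem 1%N m * count (fun y => 1 < y)%N t)%N.
Proof.
elim: m => //= z m IH /andP[hz /IH ->].
by case: z hz => [|[|z]] //= _; lia.
Qed.

Lemma index_nseq_cat (x y r : nat) t : x != y ->
  index y (nseq r x ++ t) = (r + index y t)%N.
Proof. by move=> xy; elim: r => //= r ->; rewrite (negbTE xy). Qed.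

Lemma all_le1_cat (a b : seq nat) : all (fun z => z <= 1)%N (a ++ b) =
  all (fun z => z <= 1)%N a && all (fun z => z <= 1)%N b.
Proof. exact: all_cat. Qed.

Lemma maskBN (K P r : nat) : (0 < K)%N -> (r <= P)%N ->
  \sum_(m <- permutations (bl K P) | index 1%N m == r) 'X^(coinvR m) =
  'X^(r * K) * Bn K.-1 (P - r).
Proof.
move=> K0 rP.
rewrite (@sum_perms_bij _ (fun m' => nseq r 0%N ++ 1%N :: m') (fun m => index 1%N m == r)
   (bl K P) (bl K.-1 (P - r)) (fun m => 'X^(coinvR m))).
- rewrite /Bn mulr_sumr; apply: eq_big_seq => m'.
  rewrite mem_permutations perm_bl => /and3P[ha /eqP h1 _].
  rewrite -exprD coinv_cat coinv_nseq /= (cnt_gt1 _ ha) map_nseq sumn_nseq /=.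
  rewrite (cnt_gt0 _ ha) h1 add1n prednK //; congr ('X^_); lia.
- by move=> x y /catl_inj [].
- move=> m'; rewrite !perm_bl => /and3P[ha /eqP h1 /eqP h0].
  rewrite all_cat all_nseq /= ha !count_cat /= !count_nseq /= h1 h0.
  rewrite index_nseq_cat //= addn0 eqxx andbT orbT /= add1n prednK //.
  by apply/andP; split; apply/eqP; lia.
move=> m; rewrite perm_bl => /and3P[ha /eqP h1 /eqP h0] /eqP hi.
have [a01 a10] := all01 _ ha.
have hr : (r < size m)%N by rewrite -hi index_mem -has_pred1 has_count h1.
have hm := @pre1 0 1 m r a01 isT hi hr.
exists (drop r.+1 m) => //.
set d := drop r.+1 m in hm *.
move: ha h1 h0; rewrite hm all_cat /= count_cat /= count_cat /= !count_nseq /=.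
move=> /andP[_ ha] h1 h0.
rewrite perm_bl ha /=; apply/andP; split; apply/eqP; lia.
Qed.

Lemma maskAN (K P i : nat) : (i <= P)%N ->
  \sum_(m <- permutations (bl K P) | (i <= index 1%N m)%N) 'X^(coinvR m) =
  'X^(i * K) * Bn K (P - i).
Proof.
move=> iP.
rewrite (@sum_perms_bij _ (fun m' => nseq i 0%N ++ m') (fun m => (i <= index 1%N m)%N)
   (bl K P) (bl K (P - i)) (fun m => 'X^(coinvR m))).
- rewrite /Bn mulr_sumr; apply: eq_big_seq => m'.
  rewrite mem_permutations perm_bl => /and3P[ha /eqP h1 _].
  rewrite -exprD coinv_cat coinv_nseq /= map_nseq sumn_nseq.
  rewrite (cnt_gt0 _ ha) h1; congr ('X^_); lia.
- exact: catl_inj.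
- move=> m'; rewrite !perm_bl => /and3P[ha /eqP h1 /eqP h0].
  rewrite all_cat all_nseq /= ha !count_cat /= !count_nseq /= h1 h0.
  rewrite index_nseq_cat //= leq_addr andbT orbT /=.
  by apply/andP; split; apply/eqP; lia.
move=> m; rewrite perm_bl => /and3P[ha /eqP h1 /eqP h0] hi.
have [a01 a10] := all01 _ ha.
have hm := @pre2 0 1 m i a01 hi.
exists (drop i m) => //.
set d := drop i m in hm *.
move: ha h1 h0; rewrite hm all_cat /= !count_cat /= !count_nseq /=.
move=> /andP[_ ha] h1 h0.
rewrite perm_bl ha /=; apply/andP; split; apply/eqP; lia.
Qed.

Lemma maskB1 (M A r : nat) : (r <= M)%N ->
  \sum_(m <- permutations (bl M A) | (r <= index 0%N (rev m))%N) 'X^(coinvR m) =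
  'X^(r * A) * Bn (M - r) A.
Proof.
move=> rM.
rewrite (@sum_perms_bij _ (fun m' => m' ++ nseq r 1%N) (fun m => (r <= index 0%N (rev m))%N)
   (bl M A) (bl (M - r) A) (fun m => 'X^(coinvR m))).
- rewrite /Bn mulr_sumr; apply: eq_big_seq => m'.
  rewrite mem_permutations perm_bl => /and3P[ha _ /eqP h0].
  rewrite -exprD coinv_cat coinv_nseq (sum_pref _ _ ha) !count_nseq /= h0.
  congr ('X^_); lia.
- exact: catr_inj.
- move=> m'; rewrite !perm_bl => /and3P[ha /eqP h1 /eqP h0].
  rewrite all_cat all_nseq /= ha !count_cat /= !count_nseq /= h1 h0.
  rewrite rev_cat rev_nseq index_nseq_cat //= leq_addr andbT orbT /=.
  by apply/andP; split; apply/eqP; lia.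
move=> m; rewrite perm_bl => /and3P[ha /eqP h1 /eqP h0] hi.
have [a01 a10] := all01 _ ha.
have a10' : all (fun z => (z == 1%N) || (z == 0%N)) (rev m) by rewrite all_rev.
have hm := @pre2 1 0 (rev m) r a10' hi.
set d := drop r (rev m) in hm *.
have mE : m = rev d ++ nseq r 1%N by rewrite -[m]revK hm rev_cat rev_nseq.
exists (rev d) => //.
move: ha h1 h0; rewrite mE all_cat /= !count_cat /= !count_nseq /=.
move=> /andP[ha _] h1 h0.
rewrite perm_bl ha /=; apply/andP; split; apply/eqP; lia.
Qed.

Lemma maskA1 (M A r : nat) : (r <= M)%N -> (0 < A)%N ->
  \sum_(m <- permutations (bl M A) | index 0%N (rev m) == r) 'X^(coinvR m) =
  'X^(r * A) * Bn (M - r) A.-1.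
Proof.
move=> rM A0.
rewrite (@sum_perms_bij _ (fun m' => m' ++ 0%N :: nseq r 1%N) (fun m => index 0%N (rev m) == r)
   (bl M A) (bl (M - r) A.-1) (fun m => 'X^(coinvR m))).
- rewrite /Bn mulr_sumr; apply: eq_big_seq => m'.
  rewrite mem_permutations perm_bl => /and3P[ha _ /eqP h0].
  rewrite -exprD coinv_cat /= coinv_nseq (sum_pref _ _ ha) /= !count_nseq /= h0.
  congr ('X^_); rewrite -[in RHS](prednK A0); lia.
- exact: catr_inj.
- move=> m'; rewrite !perm_bl => /and3P[ha /eqP h1 /eqP h0].
  rewrite all_cat /= all_nseq /= ha !count_cat /= !count_nseq /= h1 h0.
  rewrite rev_cat rev_cons rev_nseq cat_rcons index_nseq_cat //= addn0 eqxx andbT orbT /=.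
  by rewrite !mul1n !mul0n !add0n !addn0 subnK // addn1 prednK // !eqxx.
move=> m; rewrite perm_bl => /and3P[ha /eqP h1 /eqP h0] /eqP hi.
have [a01 a10] := all01 _ ha.
have a10' : all (fun z => (z == 1%N) || (z == 0%N)) (rev m) by rewrite all_rev.
have hr : (r < size (rev m))%N.
  by rewrite -hi index_mem mem_rev -has_pred1 has_count h0.
have hm := @pre1 1 0 (rev m) r a10' isT hi hr.
set d := drop r.+1 (rev m) in hm *.
have mE : m = rev d ++ 0%N :: nseq r 1%N.
  by rewrite -[m]revK hm rev_cat rev_cons rev_nseq cat_rcons.
exists (rev d) => //.
move: ha h1 h0; rewrite mE all_cat /= !count_cat /= !count_nseq /=.
move=> /andP[ha _] h1 h0.
rewrite perm_bl ha /=; apply/andP; split; apply/eqP; lia.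
Qed.


Lemma qint_monic s : (0 < s)%N -> (qint s \is monic) && (size (qint s) == s).
Proof.
case: s => // s _; elim: s => [|s IH].
  by rewrite /qint big_ord1 expr0 monic1 size_poly1.
move/andP: IH => [m1 /eqP sz].
rewrite /qint big_ord_recr /= -/(qint s.+1).
have hs : leq (size (qint s.+1)).+1 (size ('X^(s.+1) : {poly int})) by rewrite size_polyXn sz.
rewrite monicE lead_coefDr // lead_coefXn eqxx /=.
by rewrite addrC size_addl // size_polyXn.
Qed.

Lemma qfact_monic m : qfact m \is monic.
Proof.
rewrite /qfact big_seq; apply: monic_prod => i; rewrite mem_index_iota => /andP[h _].
by case/andP: (qint_monic _ h).
Qed.

Lemma divp_exact (p d : {poly int}) : d \is monic -> (p * d) %/ d = p.
Proof. by move=> hd; rewrite Pdiv.IdomainMonic.mulpK. Qed.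

Lemma BnE a b : Bn a b * (qfact b * qfact a) = qfact (b + a).
Proof.
have hall : all (fun x => x < 2)%N (bl a b).
  by rewrite /bl all_cat !all_nseq !orbT.
have := E0 _ _ hall; rewrite /Bn big_ord_recr big_ord_recr big_ord0 /= mul1r.
rewrite /bl !count_cat !count_nseq /= size_cat !size_nseq.
by rewrite !mul1n !mul0n addn0 add0n.
Qed.

Lemma QM3 a b c : qmultinom (a + b + c) [:: a; b; c] = Bn a (b + c) * Bn b c.
Proof.
rewrite /qmultinom /= addn0 addnA eqxx !big_cons big_nil mulr1.
have e : qfact (a + b + c) = (Bn a (b + c) * Bn b c) * (qfact a * (qfact b * qfact c)).
  rewrite (_ : (a + b + c = b + c + a)%N); last by lia.
  rewrite -BnE (addnC b c) -BnE; ring.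
rewrite e divp_exact //.
by rewrite !monicMl ?qfact_monic.
Qed.


Lemma word_of_inj (n N : nat) : injective (@word_of n N).
Proof.
move=> t1 t2 /inj_map h; apply: val_inj; apply: h.
by move=> x y [] /val_inj.
Qed.

Lemma word_of_props (n N : nat) (t : N.-tuple 'I_n) :
  (size (word_of t) == N) && all (fun x => (1 <= x <= n)%N) (word_of t).
Proof.
rewrite /word_of size_map size_tuple eqxx /=.
by apply/allP => x /mapP[y _ ->] /=; rewrite ltn_ord.
Qed.

Lemma tuple_perm (n N : nat) (s : seq nat) (P Q : pred (seq nat)) (G : seq nat -> {poly int}) :
  (0 < n)%N ->
  (forall w, size w = N -> all (fun x => (1 <= x <= n)%N) w -> P w = perm_eq w s && Q w) ->
  (forall w, perm_eq w s -> (size w == N) && all (fun x => (1 <= x <= n)%N) w) ->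
  \sum_(t : N.-tuple 'I_n | P (word_of t)) G (word_of t) =
  \sum_(w <- permutations s | Q w) G w.
Proof.
move=> n0 hP hs.
rewrite (eq_bigl (fun t => perm_eq (word_of t) s && Q (word_of t))); last first.
  by move=> t; have /andP[/eqP h1 h2] := word_of_props _ _ t; rewrite hP.
rewrite -(big_map (@word_of n N) (fun w => perm_eq w s && Q w) G).
rewrite -big_filter_cond; apply: perm_big; apply: uniq_perm.
- by rewrite filter_uniq // (map_inj_uniq (@word_of_inj n N)) index_enum_uniq.
- exact: permutations_uniq.
move=> w; rewrite mem_filter mem_permutations.
case pw: (perm_eq w s) => //=.
have /andP[/eqP sz ha] := hs w pw.
apply/mapP.
pose f (y : nat) : 'I_n := insubd (Ordinal n0) y.-1.
have szf : size (map f w) == N by rewrite size_map sz.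
exists (Tuple szf); first exact: mem_index_enum.
rewrite /word_of /= -map_comp; apply/esym/map_id_in => y yw /=.
move/allP: ha => /(_ y yw) /andP[h1 h2].
rewrite val_insubd /=; case: ifP => [_|]; first by rewrite prednK.
by move=> /negbT; rewrite -leqNgt => h; lia.
Qed.


Definition mid (n : nat) (alpha : nat -> nat) : seq nat :=
  flatten [seq nseq (alpha i) i | i <- iota 2 (n - 2)].

Definition s0 (n : nat) (alpha : nat -> nat) (k A : nat) : seq nat :=
  nseq k n ++ nseq A 1%N ++ mid n alpha.

Lemma sumn_ind (f : nat -> nat) (x a b : nat) :
  sumn [seq ((i == x) * f i)%N | i <- iota a b] = if (a <= x < a + b)%N then f x else 0%N.
Proof.
elim: b a => [|b IH] a /=; first by case: ifP => //; lia.
rewrite IH; case: (eqVneq a x) => [->|ax] /=.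
  by rewrite mul1n leqnn addnS ltnS leq_addr /=; case: ifP => //; lia.
rewrite mul0n add0n; case: ifP => h1; case: ifP => h2 //; lia.
Qed.

Lemma count_mid n alpha x :
  count_mem x (mid n alpha) = if (2 <= x < n)%N then alpha x else 0%N.
Proof.
rewrite /mid count_flatten -map_comp.
rewrite (eq_map (_ : _ =1 fun i => ((i == x) * alpha i)%N)); last first.
  by move=> i /=; rewrite count_nseq.
rewrite sumn_ind; case: ifP; case: ifP => //; lia.
Qed.

Lemma size_mid n alpha : size (mid n alpha) = asum n alpha.
Proof.
rewrite /mid size_flatten /shape -map_comp /asum.
rewrite (eq_map (_ : _ =1 alpha)); last by move=> i /=; rewrite size_nseq.
by rewrite sumnE big_map.
Qed.

Lemma mid_range n alpha y : y \in mid n alpha -> (2 <= y < n)%N.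
Proof.
move=> ym; have : (0 < count_mem y (mid n alpha))%N by rewrite -has_count has_pred1.
by rewrite count_mid; case: ifP.
Qed.

Lemma s0_props n alpha N k A (w : seq nat) : (3 <= n)%N -> (k + A + asum n alpha = N)%N ->
  perm_eq w (s0 n alpha k A) -> (size w == N) && all (fun x => (1 <= x <= n)%N) w.
Proof.
move=> n3 hN pw; rewrite (perm_size pw) /s0 !size_cat !size_nseq size_mid addnA hN eqxx /=.
rewrite (perm_all _ pw) !all_cat !all_nseq /=; apply/andP; split; first by lia.
apply/andP; split; first by lia.
by apply/allP => y /mid_range; lia.
Qed.

Lemma inW_perm n alpha N L k (w : seq nat) : (3 <= n)%N -> (k <= L)%N -> (L + asum n alpha = N)%N ->
  inW n alpha N L k w = perm_eq w (s0 n alpha k (L - k)).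
Proof.
move=> n3 kL hN; apply/idP/idP.
  case/and5P => /eqP sz ha /eqP cn /eqP c1 hal.
  apply/allP => x _; apply/eqP.
  rewrite /s0 !count_cat !count_nseq count_mid /=.
  case: ifP => hx.
    have : x \in iota 2 (n - 2) by rewrite mem_iota; lia.
    move/allP: hal => h /h /= /eqP ->; lia.
  case: (eqVneq x n) => [->|xn]; first by rewrite cn; lia.
  case: (eqVneq x 1%N) => [->|x1]; first by rewrite c1; lia.
  have -> : count_mem x w = 0%N.
    apply/count_memPn/negP => xw; move/allP: ha => /(_ x xw) /= h.
    by move: hx; lia.
  lia.
move=> pw; have hNk : (k + (L - k) + asum n alpha = N)%N by lia.
have /andP[sz ha] := @s0_props n alpha N k (L - k) w n3 hNk pw.
rewrite /inW sz ha /= !(permP pw) /s0 !count_cat !count_nseq !count_mid /=.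
apply/and3P; split.
- by rewrite ltnn andbF; apply/eqP; lia.
- by apply/eqP; lia.
apply/allP => i; rewrite mem_iota => hi /=.
rewrite (permP pw) /s0 !count_cat !count_nseq !count_mid /=.
by case: ifP => h; apply/eqP; lia.
Qed.


Definition Mid n alpha : {poly int} := \sum_(u <- permutations (mid n alpha)) 'X^(coinvR u).

Lemma QM1 n alpha : (2 <= n)%N -> qmultinom (asum n alpha) (aseq n alpha) = Mid n alpha.
Proof.
move=> n2.
have hs : sumn (aseq n alpha) = asum n alpha by rewrite /aseq sumnE big_map.
rewrite /qmultinom hs eqxx.
have hall : all (fun x => x < n)%N (mid n alpha).
  by apply/allP => y /mid_range; lia.
have := E0 _ _ hall; rewrite size_mid => <-.
have -> : \prod_(y < n) qfact (count_mem (y : nat) (mid n alpha)) =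
          \prod_(b <- aseq n alpha) qfact b.
  rewrite -(big_mkord xpredT (fun y => qfact (count_mem y (mid n alpha)))).
  rewrite big_ltn; last by lia.
  rewrite big_ltn; last by lia.
  rewrite !count_mid /= qfact0 !mul1r /aseq big_map /index_iota.
  apply: eq_big_seq => y; rewrite mem_iota => hy.
  by rewrite count_mid; case: ifP => //; lia.
apply: divp_exact; rewrite big_seq; apply: monic_prod => i _.
exact: qfact_monic.
Qed.


Definition mu1 (n : nat) := fun y : nat => if y == n then 1%N else 0%N.
Definition mu2 := fun y : nat => if y == 1%N then 0%N else 1%N.

Lemma map_cst_in (f : nat -> nat) (c : nat) (s : seq nat) :
  (forall y, y \in s -> f y = c) -> map f s = nseq (size s) c.
Proof.
elim: s => //= y s IH h; rewrite h ?inE ?eqxx // IH //.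
by move=> z zs; apply: h; rewrite inE zs orbT.
Qed.

Lemma s0_mem n alpha k A y : y \in s0 n alpha k A ->
  [\/ y = n, y = 1%N | (2 <= y < n)%N].
Proof.
rewrite /s0 !mem_cat !mem_nseq => /or3P[/andP[_ /eqP ->]|/andP[_ /eqP ->]|/mid_range h].
- exact: Or31.
- exact: Or32.
- exact: Or33.
Qed.

Lemma filter_s0 n alpha k A : (3 <= n)%N ->
  filter (fun y => y != n) (s0 n alpha k A) = nseq A 1%N ++ mid n alpha.
Proof.
move=> n3; rewrite /s0 !filter_cat filter_nseq eqxx /= filter_nseq.
have -> : (1%N != n) by apply/eqP; lia.
rewrite /= mul1n; congr (_ ++ _); apply/all_filterP/allP => y /mid_range; lia.
Qed.

Lemma double_split n alpha k A (c1 c2 : pred (seq nat)) : (3 <= n)%N ->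
  \sum_(w <- permutations (s0 n alpha k A) |
          c1 (map (mu1 n) w) && c2 (map mu2 (filter (fun y => y != n) w))) 'X^(coinvR w)
  = (\sum_(m <- permutations (bl k (A + asum n alpha)) | c1 m) 'X^(coinvR m)) *
    (\sum_(m <- permutations (bl (asum n alpha) A) | c2 m) 'X^(coinvR m)) * Mid n alpha.
Proof.
move=> n3.
pose f1 (m : seq nat) : {poly int} := if c1 m then 'X^(coinvR m) else 0.
pose g1 (m : seq nat) : {poly int} := if c2 m then 'X^(coinvR m) else 0.
pose f2 (v : seq nat) : {poly int} := g1 (map mu2 v) * 'X^(coinvR (filter (fun y => y != 1%N) v)).
rewrite big_mkcond.
rewrite (eq_big_seq (fun w => f1 (map (mu1 n) w) * f2 (filter (fun y => y != n) w))); last first.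
  move=> w; rewrite mem_permutations => pw.
  have hw : forall y, y \in w -> y != n -> (y < n)%N = (0 < 1)%N.
    move=> y; rewrite (perm_mem pw) => /s0_mem [->|->|h]; rewrite ?eqxx //; lia.
  have hv : forall y, y \in filter (fun y => y != n) w -> y != 1%N -> (y < 1)%N = (1 < 0)%N.
    move=> y; rewrite mem_filter (perm_mem pw) => /andP[_ /s0_mem [->|->|h]]; rewrite ?eqxx //; lia.
  rewrite (@coinv_split n 0 1 w isT hw) exprD.
  rewrite /f1 /f2 /g1 (@coinv_split 1 1 0 _ isT hv) exprD.
  rewrite -/(mu1 n) -/mu2.
  by case: (c1 _); case: (c2 _); rewrite /= ?mul0r ?mulr0 ?mulrA.
rewrite (@split_sum _ n 0 1 _ (fun m v => f1 m * f2 v) isT) -/(mu1 n).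
under eq_bigr => m _ do rewrite -mulr_sumr.
rewrite -mulr_suml -mulrA; congr (_ * _).
  rewrite [RHS]big_mkcond; apply: perms_perm.
  rewrite perm_bl; apply/and3P; split.
  - by apply/allP => y /mapP[z _ ->]; rewrite /mu1; case: ifP.
  - rewrite count_map /s0 !count_cat !count_nseq /= /mu1 eqxx /=.
    have -> : (1%N == n) = false by apply/eqP; lia.
    rewrite /= mul1n mul0n add0n.
    have -> : count (preim (fun y : nat => if y == n then 1%N else 0%N) (pred1 1%N)) (mid n alpha) = 0%N.
      apply/eqP; rewrite -leqn0 leqNgt -has_count; apply/hasPn => y /mid_range h /=.
      by case: ifP => //; move/eqP => e; lia.
    by rewrite addn0.
  - rewrite count_map /s0 !count_cat !count_nseq /= /mu1 eqxx /=.
    have -> : (1%N == n) = false by apply/eqP; lia.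
    rewrite /= mul0n mul1n add0n.
    rewrite (eq_in_count (a2 := predT)); first by rewrite count_predT size_mid.
    by move=> y /mid_range h /=; case: ifP => //; move/eqP => e; lia.
rewrite filter_s0 //.
rewrite /f2 (@split_sum _ 1 1 0 _ (fun m u => g1 m * 'X^(coinvR u)) isT) -/mu2.
under eq_bigr => m _ do rewrite -mulr_sumr.
rewrite -mulr_suml; congr (_ * _).
  rewrite [RHS]big_mkcond; apply: perms_perm.
  rewrite map_cat map_nseq /bl /mu2 eqxx /=.
  rewrite (@map_cst_in _ 1%N) ?size_mid //.
  by move=> y /mid_range h; case: ifP => //; move/eqP => e; lia.
rewrite filter_cat filter_nseq eqxx /=.
rewrite (_ : filter _ (mid n alpha) = mid n alpha) //.
by apply/all_filterP/allP => y /mid_range h; apply/eqP; lia.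
Qed.


Lemma pnE n w : pn n w = (index 1%N (map (mu1 n) w)).+1.
Proof.
rewrite /pn /index find_map; congr S; apply: eq_find => y /=.
by rewrite /mu1; case: (eqVneq y n).
Qed.

Lemma p1E n w : p1 n w = (index 0%N (rev (map mu2 (filter (fun x => x != n) w)))).+1.
Proof.
rewrite /p1 -map_rev /index find_map; congr S; apply: eq_find => y /=.
by rewrite /mu2; case: (eqVneq y 1%N).
Qed.

Lemma cnt_n_s0 n alpha k A w : (3 <= n)%N -> perm_eq w (s0 n alpha k A) ->
  count_mem n w = k.
Proof.
move=> n3 pw; rewrite (permP pw) /s0 !count_cat !count_nseq count_mid /= eqxx ltnn andbF.
have -> : (1 == n) = false by apply/eqP; lia.
by rewrite mul1n mul0n !addn0.
Qed.

Lemma cnt_1_s0 n alpha k A w : (3 <= n)%N -> perm_eq w (s0 n alpha k A) ->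
  count_mem 1%N w = A.
Proof.
move=> n3 pw; rewrite (permP pw) /s0 !count_cat !count_nseq count_mid /=.
have -> : (n == 1%N) = false by apply/eqP; lia.
by rewrite mul0n add0n addn0 mul1n.
Qed.

Lemma idx_nomem (x : nat) (s : seq nat) : x \notin s -> index x s = size s.
Proof. exact: memNindex. Qed.


Theorem mainTheorem18 (n : nat) (alpha : nat -> nat) (N l : nat) :
  (3 <= n)%N ->
  (forall i, (2 <= i <= n - 1)%N -> (0 < alpha i)%N) ->
  (asum n alpha < N)%N ->
  (2 <= l <= n)%N ->
  let L := (N - asum n alpha)%N in
  (forall k i, (k <= L - 1)%N -> (1 <= i <= N - L + 1)%N ->
     \sum_(t : N.-tuple 'I_n |
             Wgt n alpha N L k (word_of t) && (p1 n (word_of t) == i))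
        'X^(quinv' n l alpha k (word_of t))
     = 'X^(binsum n l alpha + 'C(k.+1, 2) + (i - 1) * L)
       * qmultinom (N - L) (aseq n alpha)
       * qmultinom (N - i) [:: k; (N - L + 1 - i)%N; (L - k - 1)%N])
  /\
  (forall k j, (1 <= k <= L)%N -> (1 <= j <= N - L + 1)%N ->
     \sum_(t : N.-tuple 'I_n |
             Wle n alpha N L k (word_of t) && (pn n (word_of t) == j))
        'X^(quinv' n l alpha k (word_of t))
     = 'X^(binsum n l alpha + 'C(k, 2) + (j - 1) * L)
       * qmultinom (N - L) (aseq n alpha)
       * qmultinom (N - j) [:: (k - 1)%N; (N - L + 1 - j)%N; (L - k)%N]).
Proof.
move=> n3 hpos hN hl L.
have hL : L = (N - asum n alpha)%N by [].
have L1 : (1 <= L)%N by rewrite hL; lia.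
have hNL : (N - L = asum n alpha)%N by rewrite hL; lia.
have n0 : (0 < n)%N by lia.
split.
- move=> k i hk hi.
  case: i hi => [|i] hi; first by lia.
  have [A hA] : exists A, (L - k)%N = A.+1 by exists (L - k).-1; rewrite prednK //; lia.
  have hNk : (k + A.+1 + asum n alpha = N)%N by lia.
  rewrite (_ : (L - k - 1 = A)%N); last by lia.
  rewrite (@tuple_perm n N (s0 n alpha k A.+1) (fun w => Wgt n alpha N L k w && (p1 n w == i.+1))
     (fun w => (i.+1 <= index 1 (map (mu1 n) w))%N &&
               (index 0 (rev (map mu2 (filter (fun y => y != n) w))) == i))
     (fun w => 'X^(quinv' n l alpha k w)) n0).
  + rewrite (eq_bigr (fun w => 'X^(coinvR w) * 'X^(binsum n l alpha + 'C(k, 2)))); last first.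
      by move=> w _; rewrite /quinv' coinvE -exprD addnA.
    rewrite -mulr_suml (@double_split n alpha k A.+1 (fun m => (i.+1 <= index 1 m)%N) (fun m => index 0 (rev m) == i) n3).
    rewrite maskAN; last by lia.
    rewrite maskA1 //; last by lia.
    rewrite hNL QM1; last by lia.
    rewrite (_ : (N - i.+1)%N = (k + (asum n alpha - i) + A)%N); last by lia.
    rewrite (_ : (asum n alpha + 1 - i.+1)%N = (asum n alpha - i)%N); last by lia.
    rewrite QM3 (_ : (asum n alpha - i + A = A.+1 + asum n alpha - i.+1)%N); last by lia.
    have hLk : L = (k + A.+1)%N by lia.
    rewrite (_ : (binsum n l alpha + 'C(k.+1, 2) + (i.+1 - 1) * L =
                 i.+1 * k + i * A.+1 + (binsum n l alpha + 'C(k, 2)))%N); last first.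
      rewrite binS bin1 subn1 /= hLk mulSn mulnDr; lia.
    rewrite !exprD [A.+1.-1]/=; ring.
  + move=> w sz ha.
    rewrite /Wgt (@inW_perm n alpha N L k w n3); [|lia|lia].
    rewrite hA; case pw: (perm_eq w (s0 n alpha k A.+1)) => //=.
    rewrite pnE p1E.
    set a := index 1 (map (mu1 n) w).
    set b := index 0 (rev (map mu2 (filter (fun y => y != n) w))).
    have ha0 : k = 0%N -> a = N.
      move=> k0; rewrite /a memNindex ?size_map //.
      apply/mapP => -[y yw e]; move: e; rewrite /mu1.
      case: (eqVneq y n) => [ey _|//]; move: yw; rewrite ey => yw.
      by move: (@cnt_n_s0 n alpha k A.+1 w n3 pw); rewrite k0 => /count_memPn; rewrite yw.
    case: (posnP k) => hk0.
      have := ha0 hk0; move=> hha; apply/idP/idP; lia.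
    apply/idP/idP; lia.
  + by move=> w pw; apply: (@s0_props n alpha N k A.+1 w n3 hNk pw).
- move=> k j hk hj.
  case: j hj => [|j] hj; first by lia.
  case: k hk => [|k] hk; first by lia.
  set A := (L - k.+1)%N.
  have hNk : (k.+1 + A + asum n alpha = N)%N by rewrite /A; lia.
  rewrite (@tuple_perm n N (s0 n alpha k.+1 A) (fun w => Wle n alpha N L k.+1 w && (pn n w == j.+1))
     (fun w => (index 1 (map (mu1 n) w) == j) &&
               (j <= index 0 (rev (map mu2 (filter (fun y => y != n) w))))%N)
     (fun w => 'X^(quinv' n l alpha k.+1 w)) n0).
  + rewrite (eq_bigr (fun w => 'X^(coinvR w) * 'X^(binsum n l alpha + 'C(k.+1, 2)))); last first.
      by move=> w _; rewrite /quinv' coinvE -exprD addnA.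
    rewrite -mulr_suml (@double_split n alpha k.+1 A (fun m => index 1 m == j) (fun m => (j <= index 0 (rev m))%N) n3).
    rewrite maskBN //; last by rewrite /A; lia.
    rewrite maskB1; last by lia.
    rewrite hNL QM1; last by lia.
    rewrite (_ : (N - j.+1)%N = (k + (asum n alpha - j) + A)%N); last by rewrite /A; lia.
    rewrite (_ : (asum n alpha + 1 - j.+1)%N = (asum n alpha - j)%N); last by lia.
    rewrite (_ : (k.+1 - 1)%N = k); last by lia.
    rewrite -/A QM3 (_ : (asum n alpha - j + A = A + asum n alpha - j)%N); last by lia.
    have hLk : L = (k.+1 + A)%N by rewrite /A; lia.
    rewrite (_ : (binsum n l alpha + 'C(k.+1, 2) + (j.+1 - 1) * L =
                 j * k.+1 + j * A + (binsum n l alpha + 'C(k.+1, 2)))%N); last first.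
      rewrite subn1 /= hLk mulnDr; lia.
    rewrite !exprD [k.+1.-1]/=; ring.
  + move=> w sz ha.
    rewrite /Wle (@inW_perm n alpha N L k.+1 w n3); [|lia|lia].
    rewrite -/A; case pw: (perm_eq w (s0 n alpha k.+1 A)) => //=.
    rewrite pnE p1E.
    set a := index 1 (map (mu1 n) w).
    set b := index 0 (rev (map mu2 (filter (fun y => y != n) w))).
    have hb0 : A = 0%N -> b = asum n alpha.
      move=> A0; rewrite /b memNindex ?size_rev ?size_map ?size_filter.
        have := count_predC (pred1 n) w; rewrite (@cnt_n_s0 n alpha k.+1 A w n3 pw) sz.
        rewrite (eq_count (a2 := fun y => y != n)) //; lia.
      rewrite mem_rev; apply/mapP => -[y]; rewrite mem_filter => /andP[_ yw] e; move: e.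
      rewrite /mu2; case: (eqVneq y 1%N) => [ey _|//]; move: yw; rewrite ey => yw.
      by move: (@cnt_1_s0 n alpha k.+1 A w n3 pw); rewrite A0 => /count_memPn; rewrite yw.
    case: (eqVneq A 0%N) => hA0.
      have := hb0 hA0; move=> hhb; apply/idP/idP; lia.
    apply/idP/idP; lia.
  + by move=> w pw; apply: (@s0_props n alpha N k.+1 A w n3 hNk pw).
Qed.
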